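(* Let $n\geq m\geq 1$ and let $\mathcal{C},\mathcal{D}\subseteq\binom{[n]}{m}$ be collections of $m$-subsets of $[n]=\{1,\dots,n\}$ such that the strata $\mathcal{S}^{tnz}_{\mathcal{C}}(\mathbb{R})$ and $\mathcal{S}^{tnz}_{\mathcal{D}}(\mathbb{R})$ are non-empty. Then $\mathcal{S}^{tnz}_{\mathcal{C}}(\mathbb{R})$ and $\mathcal{S}^{tnz}_{\mathcal{D}}(\mathbb{R})$ lie in the same orbit of the action of $S_n$ on $\mathcal{S}^{tnz}_{mn}(\mathbb{R})$ if and only if for any two matrices $M=(v_1,\dots,v_n),N=(w_1,\dots,w_n)\in Mat^{tnz}_{mn}(\mathbb{R})$ with $GL_m(\mathbb{R})M\in\mathcal{S}^{tnz}_{\mathcal{C}}(\mathbb{R})$ and $GL_m(\mathbb{R})N\in\mathcal{S}^{tnz}_{\mathcal{D}}(\mathbb{R})$, the sets $S=\{v_1,\dots,v_n\}$ and $T=\{w_1,\dots,w_n\}$ are isomorphic generic point arrangements.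
   Context: A point arrangement $S=\{v_1,\dots,v_n\}\subset\mathbb{R}^m$ is generic if every subset of $S$ of cardinality at most $m$ is linearly independent. Two generic point arrangements $S_1,S_2\subset\mathbb{R}^m$ are isomorphic if there is a bijection $\sigma:S_1\to S_2$ such that for every $(m+1)$-subset $\{v_{i_1},\dots,v_{i_{m+1}}\}\subseteq S_1$, writing $v_{i_{m+1}}=\sum_{j=1}^m a_jv_{i_j}$ and $\sigma(v_{i_{m+1}})=\sum_{j=1}^m b_j\sigma(v_{i_j})$, one has $a_jb_j>0$ for all $1\le j\le m$. $Mat^{tnz}_{mn}(\mathbb{R})$ is the set of real $m\times n$ matrices all of whose maximal ($m\times m$) minors $\Delta_I(M)=\det(M_I)$, $I\in\binom{[n]}{m}$ ($M_I$ the submatrix on columns $I$), are nonzero; $Gr^{tnz}_{mn}(\mathbb{R})=GL_m(\mathbb{R})\backslash Mat^{tnz}_{mn}(\mathbb{R})$ (left multiplication). For $\mathcal{C}\subseteq\binom{[n]}{m}$ the stratum $\mathcal{S}^{tnz}_{\mathcal{C}}(\mathbb{R})$ is the set of $GL_m(\mathbb{R})M\in Gr^{tnz}_{mn}(\mathbb{R})$ such that either $\Delta_I(M)>0$ for all $I\in\mathcal{C}$ and $\Delta_I(M)<0$ for all $I\notin\mathcal{C}$, or $\Delta_I(M)<0$ for all $I\in\mathcal{C}$ and $\Delta_I(M)>0$ for all $I\notin\mathcal{C}$ (so $\mathcal{S}^{tnz}_{\mathcal{C}}=\mathcal{S}^{tnz}_{\binom{[n]}{m}\setminus\mathcal{C}}$).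 $\mathcal{S}^{tnz}_{mn}(\mathbb{R})$ denotes the set of non-empty strata. The symmetric group $S_n$ acts on $Gr^{tnz}_{mn}(\mathbb{R})$ by $\sigma\bullet GL_m(\mathbb{R})(v_1,\dots,v_n)=GL_m(\mathbb{R})(v_{\sigma^{-1}(1)},\dots,v_{\sigma^{-1}(n)})$, which induces an action on $\mathcal{S}^{tnz}_{mn}(\mathbb{R})$: $\sigma\bullet\mathcal{S}^{tnz}_{\mathcal{C}}(\mathbb{R})$ is the stratum containing $\sigma\bullet GL_m(\mathbb{R})M$ for any $GL_m(\mathbb{R})M\in\mathcal{S}^{tnz}_{\mathcal{C}}(\mathbb{R})$. *)

(* Defs.v *)
From HB Require Import structures.
From mathcomp Require Import all_boot all_order all_algebra all_fingroup.
From mathcomp Require Import reals.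
Set Implicit Arguments. Unset Strict Implicit. Unset Printing Implicit Defensive.
Import Order.TTheory GRing.Theory Num.Theory.
Local Open Scope ring_scope.

Section Defs.
Variables (R : realType) (m n : nat).

(* The maximal minor Delta_I(M) for I an m-subset of [n]: determinant of the
   submatrix on the columns of I taken in increasing order
   (enum I lists the elements of I in increasing order). *)
Definition minor (M : 'M[R]_(m, n)) (I : {set 'I_n}) : R :=
  \det (\matrix_(i < m, j < m) oapp (M i) 0 (onth (enum I) j)).

Definition tnz (M : 'M[R]_(m, n)) : Prop :=
  forall I : {set 'I_n}, #|I| = m -> minor M I != 0.

(* GL_m(R) M lies in the stratum S^tnz_C(R) (the condition is GL_m-invariant). *)
Definition in_stratum (C : {set {set 'I_n}}) (M : 'M[R]_(m, n)) : Prop :=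
  tnz M /\
  ((forall I : {set 'I_n}, #|I| = m ->
      (I \in C -> 0 < minor M I) /\ (I \notin C -> minor M I < 0)) \/
   (forall I : {set 'I_n}, #|I| = m ->
      (I \in C -> minor M I < 0) /\ (I \notin C -> 0 < minor M I))).

Definition perm_act (s : 'S_n) (M : 'M[R]_(m, n)) : 'M[R]_(m, n) :=
  \matrix_(i < m, j < n) M i ((s^-1)%g j).

Definition generic (M : 'M[R]_(m, n)) : Prop :=
  forall (k : nat) (f : 'I_k -> 'I_n), (k <= m)%N -> injective f ->
  forall c : 'I_k -> R, \sum_(i < k) c i *: col (f i) M = 0 ->
  forall i, c i = 0.

(* The arrangements given by the columns of M and N are isomorphic generic
   point arrangements; the bijection is given by a permutation p of the
   indices (v_i |-> w_{p i}).  For every (m+1)-subset, with any choice of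
   distinguished element v_k and remaining elements v_{g 0},...,v_{g (m-1)},
   the coefficients of the (unique) expansions have equal signs. *)
Definition iso_arrangement (M N : 'M[R]_(m, n)) : Prop :=
  generic M /\ generic N /\
  exists p : 'S_n,
    forall (g : 'I_m -> 'I_n) (k : 'I_n), injective g -> k \notin codom g ->
    forall a b : 'I_m -> R,
      col k M = \sum_(j < m) a j *: col (g j) M ->
      col (p k) N = \sum_(j < m) b j *: col (p (g j)) N ->
      forall j, 0 < a j * b j.

End Defs.

(* Main.v *)
Require Import Defs.
From HB Require Import structures.
From mathcomp Require Import all_boot all_order all_algebra all_fingroup.
From mathcomp Require Import reals lra zify ring.
Import Order.TTheory GRing.Theory Num.Theory.
Local Open Scope ring_scope.
Set Implicit Arguments. Unset Strict Implicit. Unset Printing Implicit Defensive.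

Section H.
Variables (R : realType) (m n : nat).

Definition Dm (X : 'M[R]_(m, n)) (h : 'I_m -> 'I_n) : R :=
  \det (\matrix_(i < m, j < m) X i (h j)).

Lemma Dm_ext X h h' : h =1 h' -> Dm X h = Dm X h'.
Proof. by move=> e; rewrite /Dm; congr (\det _); apply/matrixP=> i j; rewrite !mxE e. Qed.

Lemma Dm_perm X h (t : 'S_m) : Dm X (fun j => h (t j)) = (-1) ^+ t * Dm X h.
Proof.
rewrite /Dm.
have -> : (\matrix_(i < m, j < m) X i (h (t j))) = col_perm t (\matrix_(i < m, j < m) X i (h j)).
  by apply/matrixP=> i j; rewrite !mxE.
by rewrite col_permE det_mulmx det_perm odd_permV mulrC.
Qed.

Lemma cramer (A : 'M[R]_m) (x c : 'cV[R]_m) j : A *m x = c ->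
  x j 0 * \det A = \det (\matrix_(r, l) if l == j then c r 0 else A r l).
Proof.
move=> hx.
set A' := \matrix_(r, l) _.
have cof : forall i, cofactor A' i j = cofactor A i j.
  move=> i; rewrite /cofactor; congr (_ * \det _).
  by apply/matrixP=> r l; rewrite !mxE eq_sym (negbTE (neq_lift j l)).
rewrite (expand_det_col A' j).
have e : \adj A *m c = \det A *: x.
  by rewrite -hx mulmxA mul_adj_mx mul_scalar_mx.
have := congr1 (fun M : 'cV[R]_m => M j 0) e; rewrite !mxE mulrC => <-.
apply: eq_bigr => i _; rewrite !mxE eqxx cof mulrC.
done.
Qed.


Lemma minor_nth (X : 'M[R]_(m, n)) (I : {set 'I_n}) (d : 'I_m -> 'I_n) :
  #|I| = m -> minor X I = \det (\matrix_(i < m, l < m) X i (nth (d l) (enum I) l)).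
Proof.
move=> hI; rewrite /minor; congr (\det _); apply/matrixP=> i l; rewrite !mxE.
rewrite onthE (nth_map (d l)) //= -cardE hI //.
Qed.

Lemma card_img (h : 'I_m -> 'I_n) : injective h -> #|[set h j | j in 'I_m]| = m.
Proof. by move=> hi; rewrite card_imset // card_ord. Qed.

Lemma Dm_minor (h : 'I_m -> 'I_n) : injective h ->
  exists t : 'S_m, forall X, Dm X h = (-1) ^+ t * minor X [set h j | j in 'I_m].
Proof.
move=> hi; set I := [set h j | j in 'I_m]; set s := enum I.
have sz : size s = m by rewrite -cardE card_img.
have ins : forall j, h j \in s by move=> j; rewrite mem_enum; apply: imset_f.
have lt : forall j, (index (h j) s < m)%N by move=> j; rewrite -sz index_mem.
pose tau := fun j => Ordinal (lt j).
have ti : injective tau.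
  move=> j1 j2 /(congr1 val) /= e; apply: hi.
  by rewrite -(nth_index (h j1) (ins j1)) e nth_index.
exists (perm ti) => X.
rewrite (minor_nth X h (card_img hi)) /Dm.
have -> : (\matrix_(i < m, j < m) X i (h j)) =
   col_perm (perm ti) (\matrix_(i < m, l < m) X i (nth (h l) (enum I) l)).
  by apply/matrixP=> i j; rewrite !mxE permE /= nth_index.
by rewrite col_permE det_mulmx det_perm odd_permV mulrC.
Qed.

Lemma Dm_sq X Y (h : 'I_m -> 'I_n) : injective h ->
  Dm X h * Dm Y h = minor X [set h j | j in 'I_m] * minor Y [set h j | j in 'I_m].
Proof.
move=> hi; have [t ht] := Dm_minor hi; rewrite !ht.
by rewrite mulrACA -expr2 -signr_odd sqrr_sign mul1r.
Qed.

Lemma Dm_neq0 X h : tnz X -> injective h -> Dm X h != 0.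
Proof.
move=> tX hi; have [t ht] := Dm_minor hi; rewrite ht mulf_neq0 ?signr_eq0 //.
exact: tX (card_img hi).
Qed.


Definition sameor (X Y : 'M[R]_(m, n)) := forall I J : {set 'I_n}, #|I| = m -> #|J| = m ->
  0 < (minor X I * minor Y I) * (minor X J * minor Y J).

Lemma strat_sign (C : {set {set 'I_n}}) (X Y : 'M[R]_(m, n)) : in_stratum C X -> in_stratum C Y ->
  (forall I : {set 'I_n}, #|I| = m -> 0 < minor X I * minor Y I) \/
  (forall I : {set 'I_n}, #|I| = m -> minor X I * minor Y I < 0).
Proof.
move=> [_ [hX|hX]] [_ [hY|hY]]; [left|right|right|left] => I hI;
  have [hx1 hx2] := hX I hI; have [hy1 hy2] := hY I hI;
  (case: (boolP (I \in C)) => iC; [have := hx1 iC; have := hy1 iC | have := hx2 iC; have := hy2 iC]); nra.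
Qed.

Lemma strat_sameor (C : {set {set 'I_n}}) (X Y : 'M[R]_(m, n)) : in_stratum C X -> in_stratum C Y -> sameor X Y.
Proof.
move=> sX sY I J hI hJ; case: (strat_sign sX sY) => h;
  have := h I hI; have := h J hJ; nra.
Qed.

Lemma sameor_strat (C : {set {set 'I_n}}) (X Y : 'M[R]_(m, n)) : in_stratum C Y -> tnz X -> sameor X Y -> in_stratum C X.
Proof.
move=> [tY hY] tX so; split => //.
case: (boolP [exists I : {set 'I_n}, (#|I| == m) && (minor X I * minor Y I < 0)]).
- case/existsP=> I0 /andP[/eqP hI0 neg].
  have allneg : forall I : {set 'I_n}, #|I| = m -> minor X I * minor Y I < 0.
    by move=> I hI; have := so I I0 hI hI0; nra.
  case: hY => hY; [right|left] => I hI; have [h1 h2] := hY I hI; have := allneg I hI;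
    split => iC; [have := h1 iC| have := h2 iC|have := h1 iC|have := h2 iC]; nra.
- move=> /existsPn allpos.
  have pos : forall I : {set 'I_n}, #|I| = m -> 0 < minor X I * minor Y I.
    move=> I hI; have := allpos I; rewrite hI eqxx /= -leNgt.
    have := tX I hI; have := tY I hI; move=> a b c.
    rewrite lt_neqAle c andbT eq_sym mulf_neq0 //.
  case: hY => hY; [left|right] => I hI; have [h1 h2] := hY I hI; have := pos I hI;
    split => iC; [have := h1 iC| have := h2 iC|have := h1 iC|have := h2 iC]; nra.
Qed.


Lemma mulmx_sum (X : 'M[R]_(m, n)) (h : 'I_m -> 'I_n) (x : 'cV[R]_m) :
  (\matrix_(i < m, j < m) X i (h j)) *m x = \sum_j x j 0 *: col (h j) X.
Proof.
apply/matrixP=> r c; rewrite !mxE summxE; apply: eq_bigr => j _.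
by rewrite !mxE (ord1 c) mulrC.
Qed.

Lemma adj_zero (X : 'M[R]_(m, n)) (h : 'I_m -> 'I_n) (x : 'cV[R]_m) :
  Dm X h != 0 -> (\matrix_(i < m, j < m) X i (h j)) *m x = 0 -> x = 0.
Proof.
move=> nz e; have := congr1 (mulmx (\adj (\matrix_(i < m, j < m) X i (h j)))) e.
rewrite mulmxA mul_adj_mx mul_scalar_mx mulmx0 => /eqP; rewrite scaler_eq0.
by rewrite (negbTE nz) /= => /eqP.
Qed.

Lemma extend_inj k (f : 'I_k -> 'I_n) : (k < n)%N -> injective f ->
  exists f' : 'I_k.+1 -> 'I_n, injective f' /\ forall i, f' (lift ord_max i) = f i.
Proof.
move=> kn fi.
have [x xn] : exists x, x \notin codom f.
  apply/existsP; rewrite -negb_forall; apply/negP => /forallP all.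
  have : (#|'I_n| <= #|codom f|)%N by apply: subset_leq_card; apply/subsetP => y _; exact: all.
  by rewrite card_ord card_codom // card_ord leqNgt kn.
exists (fun i => if unlift ord_max i is Some j then f j else x); split; last first.
  by move=> i; rewrite liftK.
move=> i1 i2; case: unliftP => [j1 ->|->]; case: unliftP => [j2 ->|->] //.
- by move/fi ->.
- by move=> e; rewrite -e codom_f in xn.
- by move=> e; rewrite e codom_f in xn.
Qed.

Lemma tnz_generic (X : 'M[R]_(m, n)) : (m <= n)%N -> tnz X -> generic X.
Proof.
move=> mn tX.
suff H : forall d k (f : 'I_k -> 'I_n), (k + d = m)%N -> injective f ->
  forall c : 'I_k -> R, \sum_(i < k) c i *: col (f i) X = 0 -> forall i, c i = 0.
  move=> k f km fi c e i; apply: (H (m - k)%N k f) => //; exact: subnKC.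
elim=> [|d IH] k f km fi c e i.
- rewrite addn0 in km; subst k.
  have := adj_zero (Dm_neq0 tX fi) (x := \col_j c j).
  rewrite mulmx_sum.
  have -> : \sum_j (\col_j0 c j0) j 0 *: col (f j) X = 0.
    by rewrite -{2}e; apply: eq_bigr => j _; rewrite mxE.
  by move=> /(_ erefl) /matrixP /(_ i 0); rewrite !mxE.
- have [f' [fi' ef']] : exists f' : 'I_k.+1 -> 'I_n, injective f' /\ forall i, f' (lift ord_max i) = f i.
    apply: extend_inj fi; apply: leq_trans mn; rewrite -km; lia.
  pose c' := fun i : 'I_k.+1 => if unlift ord_max i is Some j then c j else 0.
  have := IH k.+1 f' ltac:(by rewrite -km addSnnS) fi' c'.
  have -> : \sum_(i < k.+1) c' i *: col (f' i) X = 0.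
    rewrite big_ord_recr /= /c' unlift_none scale0r addr0 -[RHS]e.
    apply: eq_bigr => j _.
    have -> : widen_ord (leqnSn k) j = lift ord_max j by apply/eqP; rewrite -val_eqE /= /bump leqNgt ltn_ord.
    by rewrite liftK ef'.
  by move=> /(_ erefl (lift ord_max i)); rewrite /c' liftK.
Qed.


Definition upd (h : 'I_m -> 'I_n) (j : 'I_m) (k : 'I_n) : 'I_m -> 'I_n :=
  fun l => if l == j then k else h l.

Lemma upd_inj h j k : injective h -> k \notin codom h -> injective (upd h j k).
Proof.
move=> hi kn l1 l2; rewrite /upd; case: eqP => [->|n1]; case: eqP => [->|n2] //.
- by move=> e; rewrite e codom_f in kn.
- by move=> e; rewrite -e codom_f in kn.
- exact: hi.
Qed.

Lemma trans0 (x y z : R) : 0 < x * y -> 0 < y * z -> 0 < x * z.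
Proof. nra. Qed.

Lemma exch_const (Q : ('I_m -> 'I_n) -> R) :
  (forall h h', h =1 h' -> Q h = Q h') ->
  (forall h (t : 'S_m), injective h -> 0 < Q (fun j => h (t j)) * Q h) ->
  (forall h j k, injective h -> k \notin codom h -> 0 < Q h * Q (upd h j k)) ->
  forall h h2, injective h -> injective h2 -> 0 < Q h * Q h2.
Proof.
move=> qx qp qe h h2 hi h2i.
have refl : forall g, injective g -> 0 < Q g * Q g.
  move=> g gi; have := qp g 1%g gi.
  have -> : Q (fun j => g ((1%g : 'S_m) j)) = Q g by apply: qx => l; rewrite perm1.
  done.
pose S (g : 'I_m -> 'I_n) := [set l | g l != h2 l].
suff H : forall d g, (#|S g| <= d)%N -> injective g -> 0 < Q g * Q h2 by exact: (H _ h (leqnn _) hi).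
elim=> [|d IH] g.
  rewrite leqn0 cards_eq0 => /eqP S0 gi; rewrite (qx g h2) ?refl // => l.
  apply/eqP; apply/negPn; apply/negP => nl; have : l \in S g by rewrite inE.
  by rewrite S0 inE.
move=> Sd gi.
case: (boolP [exists j, g j != h2 j]); last first.
  move=> /existsPn all; rewrite (qx g h2) ?refl // => l.
  by apply/eqP; have := all l; rewrite negbK.
case/existsP=> j nj.
have jS : j \in S g by rewrite inE.
have cardD : (#|S g :\ j| <= d)%N by move: Sd; rewrite (cardsD1 j) jS.
case: (boolP (h2 j \in codom g)).
- case/codomP=> i ei.
  have nij : i != j by apply/eqP => eij; rewrite ei eij eqxx in nj.
  pose g1 := fun l => g (tperm i j l).
  have g1i : injective g1 by move=> l1 l2 /gi /perm_inj.
  have sub : S g1 \subset S g :\ j.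
    apply/subsetP => l; rewrite !inE /g1; case: tpermP => [->|->|nli nlj].
    - move=> _; rewrite nij /=; rewrite -ei; apply/eqP => e.
      by move: (h2i _ _ e) => eji; rewrite eji eqxx in nij.
    - by rewrite ei eqxx.
    - by move=> ->; rewrite andbT; apply/eqP.
  have := IH g1 (leq_trans (subset_leq_card sub) cardD) g1i.
  apply: trans0; rewrite mulrC; exact: qp.
- move=> nc.
  have g1i := @upd_inj g j (h2 j) gi nc.
  have sub : S (upd g j (h2 j)) \subset S g :\ j.
    apply/subsetP => l; rewrite !inE /upd; case: (eqVneq l j) => [->|nl] /=; first by rewrite eqxx.
    by [].
  have := IH _ (leq_trans (subset_leq_card sub) cardD) g1i.
  apply: trans0; exact: qe.
Qed.


Lemma sq_pos (x : R) : x != 0 -> 0 < x * x.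
Proof. by move=> nx; rewrite lt_def mulf_neq0 // -expr2 sqr_ge0. Qed.

Lemma cram2 (X : 'M[R]_(m, n)) h k (a : 'I_m -> R) j :
  col k X = \sum_l a l *: col (h l) X -> a j * Dm X h = Dm X (upd h j k).
Proof.
move=> e.
have hx : (\matrix_(i < m, l < m) X i (h l)) *m (\col_l a l) = col k X.
  by rewrite mulmx_sum e; apply: eq_bigr => l _; rewrite mxE.
have := cramer j hx; rewrite mxE => ->; rewrite /Dm; congr (\det _).
by apply/matrixP=> r l; rewrite !mxE /upd; case: eqP.
Qed.

Lemma Dm_act (s : 'S_n) (X : 'M[R]_(m, n)) h :
  Dm (perm_act s X) (fun l => s (h l)) = Dm X h.
Proof. by rewrite /Dm; congr (\det _); apply/matrixP=> r l; rewrite !mxE permK. Qed.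

Lemma exists_coef (X : 'M[R]_(m, n)) h k : Dm X h != 0 ->
  exists a : 'I_m -> R, col k X = \sum_l a l *: col (h l) X.
Proof.
move=> nz; set A := \matrix_(i < m, l < m) X i (h l).
have uA : A \in unitmx by rewrite unitmxE unitfE.
exists (fun l => (invmx A *m col k X) l 0).
by rewrite -mulmx_sum mulKVmx.
Qed.


Lemma eI_inj (hmn : (m <= n)%N) (I : {set 'I_n}) : #|I| = m ->
  injective (fun l : 'I_m => nth (widen_ord hmn l) (enum I) l).
Proof.
move=> hI l1 l2 /= e; apply/val_inj/eqP.
have sz : size (enum I) = m by rewrite -cardE.
rewrite -(nth_uniq (widen_ord hmn l1) _ _ (enum_uniq I)) ?sz.
  apply/eqP; rewrite e; apply: set_nth_default; by rewrite sz.
all: exact: ltn_ord.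
Qed.

End H.

Unset Implicit Arguments.

Theorem mainTheorem1 (R : realType) (m n : nat) (hm : (1 <= m)%N) (hmn : (m <= n)%N)
  (C D : {set {set 'I_n}})
  (hC : forall I, I \in C -> #|I| = m) (hD : forall I, I \in D -> #|I| = m)
  (neC : exists M : 'M[R]_(m, n), in_stratum C M)
  (neD : exists N : 'M[R]_(m, n), in_stratum D N) :
  (exists s : 'S_n, forall M : 'M[R]_(m, n), in_stratum C M -> in_stratum D (perm_act s M))
  <->
  (forall M N : 'M[R]_(m, n), in_stratum C M -> in_stratum D N -> iso_arrangement M N).
Proof.
split.
- move=> [s hs] M N sM sN.
  have sM' := hs M sM.
  split; first exact: tnz_generic hmn sM.1.
  split; first exact: tnz_generic hmn sN.1.
  exists s => g k gi kn a b ea eb j.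
  have g'i := @upd_inj _ _ g j k gi kn.
  have sgi : injective (fun l => s (g l)) by move=> l1 l2 /perm_inj /gi.
  have sg'i : injective (fun l => s (upd g j k l)) by move=> l1 l2 /perm_inj /g'i.
  have e1 := cram2 j ea.
  have e2 := cram2 j eb.
  have e3 : Dm N (upd (fun l => s (g l)) j (s k)) = Dm N (fun l => s (upd g j k l)).
    by apply: Dm_ext => l; rewrite /upd; case: eqP.
  rewrite e3 in e2.
  have so := strat_sameor sM' sN.
  have := so _ _ (card_img sgi) (card_img sg'i).
  rewrite -(Dm_sq _ _ sgi) -(Dm_sq _ _ sg'i) !Dm_act -e1 -e2.
  have nz : Dm M g * Dm N (fun l => s (g l)) != 0.
    by rewrite mulf_neq0 // Dm_neq0 //; [exact: sM.1|exact: sN.1].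
  have := sq_pos nz; nra.
- move=> H.
  have [M0 sM0] := neC; have [N0 sN0] := neD.
  have [_ [_ [p hp]]] := H M0 N0 sM0 sN0.
  exists p => M sM.
  pose Q h := Dm M0 h * Dm N0 (fun l => p (h l)).
  have Qnz : forall h, injective h -> Q h != 0.
    move=> h hi; rewrite mulf_neq0 // Dm_neq0 //; [exact: sM0.1|exact: sN0.1|].
    by move=> l1 l2 /perm_inj /hi.
  have Qc : forall h h2, injective h -> injective h2 -> 0 < Q h * Q h2.
    apply: exch_const.
    + by move=> h h' e; rewrite /Q; congr (_ * _); apply: Dm_ext => l; rewrite e.
    + move=> h t hi.
      have -> : Q (fun j => h (t j)) = Q h.
        rewrite /Q Dm_perm (Dm_perm N0 (fun l => p (h l)) t).
        by rewrite mulrACA -expr2 -signr_odd sqrr_sign mul1r.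
      exact: sq_pos (Qnz h hi).
    + move=> h j k hi kn.
      have phi : injective (fun l => p (h l)) by move=> l1 l2 /perm_inj /hi.
      have [a ea] := exists_coef k (Dm_neq0 sM0.1 hi).
      have [b eb] := exists_coef (p k) (Dm_neq0 sN0.1 phi).
      have ab := hp h k hi kn a b ea eb j.
      have e1 := cram2 j ea.
      have e2 := cram2 j eb.
      have e3 : Dm N0 (upd (fun l => p (h l)) j (p k)) = Dm N0 (fun l => p (upd h j k l)).
        by apply: Dm_ext => l; rewrite /upd; case: eqP.
      rewrite e3 in e2.
      have -> : Q (upd h j k) = a j * b j * Q h by rewrite /Q -e1 -e2; ring.
      have := sq_pos (Qnz h hi); nra.
  pose eI (I : {set 'I_n}) := fun l : 'I_m => nth (widen_ord hmn l) (enum I) l.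
  pose hI I := fun l => (p^-1)%g (eI I l).
  have hIi : forall I : {set 'I_n}, #|I| = m -> injective (hI I).
    by move=> I cI l1 l2 /perm_inj /(@eI_inj _ _ hmn I cI).
  have mA : forall I : {set 'I_n}, #|I| = m -> minor (perm_act p M) I = Dm M (hI I).
    move=> I cI; rewrite (minor_nth _ (fun l => widen_ord hmn l) cI) /Dm.
    by congr (\det _); apply/matrixP=> r l; rewrite !mxE.
  have mN : forall I : {set 'I_n}, #|I| = m -> minor N0 I = Dm N0 (fun l => p (hI I l)).
    move=> I cI; rewrite (minor_nth _ (fun l => widen_ord hmn l) cI) /Dm.
    by congr (\det _); apply/matrixP=> r l; rewrite !mxE permKV.
  apply: (sameor_strat sN0).
    by move=> I cI; rewrite mA // Dm_neq0 //; [exact: sM.1|exact: hIi].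
  move=> I J cI cJ; rewrite !mA // !mN //.
  have soM := strat_sameor sM sM0.
  have hA := soM _ _ (card_img (hIi I cI)) (card_img (hIi J cJ)).
  rewrite -!Dm_sq ?hIi // in hA.
  have hQ := Qc _ _ (hIi I cI) (hIi J cJ).
  have c1 := sq_pos (Dm_neq0 sM0.1 (hIi I cI)).
  have c2 := sq_pos (Dm_neq0 sM0.1 (hIi J cJ)).
  have c12 := mulr_gt0 c1 c2.
  rewrite -(pmulr_lgt0 _ c12).
  have := mulr_gt0 hA hQ; rewrite /Q.
  set x1 := Dm M (hI I); set x2 := Dm M (hI J); set y1 := Dm M0 (hI I); set y2 := Dm M0 (hI J).
  set z1 := Dm N0 _; set z2 := Dm N0 _.
  suff -> : x1 * z1 * (x2 * z2) * (y1 * y1 * (y2 * y2)) = x1 * y1 * (x2 * y2) * (y1 * z1 * (y2 * z2)) by [].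
  ring.
  exact: hIi.
  exact: hIi.
Qed.
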